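(* Fix $q\ge 2$ and a positive integer $d$. There exists a constant $C>0$ such that for all sufficiently large $n$ and all $k$ with $d\le k\le n$, $$a_q(n,k,d)\le q^{\,n-C\frac{(n-2k)k^{d-1}}{q^k}}.$$
   Context: $\Sigma_q=\{0,\dots,q-1\}$, $w_H$ is Hamming weight. A vector $\vec a\in\Sigma_q^n$ is a $(d,k)$-window weight limited (WWL) vector if $n<k$ or $w_H(a_i,\dots,a_{i+k-1})\ge d$ for all $i\in[1,n-k+1]$. $a_q(n,k,d)$ is the number of $(d,k)$-WWL vectors in $\Sigma_q^n$. *)

(* Defs.v *)
From mathcomp Require Import all_boot.
Set Implicit Arguments. Unset Strict Implicit. Unset Printing Implicit Defensive.

Definition wH (q : nat) (s : seq 'I_q) : nat := count (fun x : 'I_q => val x != 0) s.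

Definition wwl (q n k d : nat) (a : n.-tuple 'I_q) : bool :=
  (n < k) || [forall i : 'I_n.+1, (i + k <= n) ==> (d <= wH (take k (drop i a)))].

Definition a_q (q n k d : nat) : nat := #|[set a : n.-tuple 'I_q | wwl k d a]|.

(* Main.v *)
Require Import Defs.
From Stdlib Require Import Reals Lra.
From mathcomp Require Import all_boot zify.

Lemma wwlP q n k d (a : n.-tuple 'I_q) :
  reflect (n < k \/ forall i, i + k <= n -> d <= wH (take k (drop i a))) (wwl k d a).
Proof.
apply: (iffP orP) => [[->|/forallP H]|[->|H]]; [by left| right | by left | right].
- move=> i hi; have hi' : i < n.+1 by lia.
  by move: (H (Ordinal hi')) => /implyP /= ->.
- by apply/forallP => i; apply/implyP => hi; apply: H.
Qed.

Definition Sset q n k d := [set a : n.-tuple 'I_q | wwl k d a].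

Lemma a_qE q n k d : a_q q n k d = #|Sset q n k d|.
Proof. by []. Qed.

Lemma Sset_split q n L k d : k <= L ->
  #|Sset q (n + L) k d| <= #|Sset q n k d| * #|Sset q L k d|.
Proof.
move=> hkL.
have e1 : forall a : (n + L).-tuple 'I_q, size (take n a) == n.
  by move=> a; rewrite size_takel // size_tuple leq_addr.
have e2 : forall a : (n + L).-tuple 'I_q, size (drop n a) == L.
  by move=> a; rewrite size_drop size_tuple addKn.
pose phi (a : (n + L).-tuple 'I_q) := (Tuple (e1 a), Tuple (e2 a)).
have phi_inj : injective phi.
  move=> a b [] h1 h2; apply: val_inj => /=.
  by rewrite -(cat_take_drop n a) -(cat_take_drop n b) h1 h2.
rewrite -cardsX -(card_imset _ phi_inj); apply: subset_leq_card.
apply/subsetP => _ /imsetP [a + ->]; rewrite !inE => /wwlP ha.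
rewrite /phi; apply/andP; split; apply/wwlP.
- case: (ltnP n k) => hnk; first by left.
  right => i hi; rewrite /= take_drop take_takel; last by lia.
  rewrite -take_drop; case: ha => [|]; [lia | apply; lia].
- right => i hi /=; rewrite drop_drop.
  case: ha => [|]; [lia | apply; lia].
Qed.

Lemma card_all_tuples q n : #|{: n.-tuple 'I_q}| = q ^ n.
Proof. by rewrite card_tuple card_ord. Qed.

Lemma Sset_le q n k d : #|Sset q n k d| <= q ^ n.
Proof. by rewrite -card_all_tuples; apply: max_card. Qed.

Lemma Sset_compl q L k d : #|Sset q L k d| + #|~: Sset q L k d| = q ^ L.
Proof. by rewrite cardsC card_all_tuples. Qed.

Lemma Sset_iter q r m L k d : k <= L ->
  #|Sset q (r + m * L) k d| <= q ^ r * #|Sset q L k d| ^ m.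
Proof.
move=> hkL; elim: m => [|m IH]; first by rewrite mul0n addn0 expn0 muln1 Sset_le.
rewrite mulSn addnCA addnC.
apply: leq_trans (Sset_split _ _ _ _ _ hkL) _.
by rewrite expnS mulnCA [_ * (_ * _)]mulnC leq_mul2r IH orbT.
Qed.

Lemma window_map q (g : nat -> 'I_q) L j k : j + k <= L ->
  wH (take k (drop j (map g (iota 0 L)))) = count (fun p => val (g p) != 0) (iota j k).
Proof.
move=> h; rewrite -map_drop -map_take drop_iota take_iota add0n.
have -> : minn k (L - j) = k by apply/minn_idPl; lia.
by rewrite /wH count_map.
Qed.

Lemma count_iota_all (P : pred nat) a b :
  (forall p, a <= p < a + b -> P p) -> count P (iota a b) = b.
Proof.
move=> h; rewrite (@eq_in_count _ _ predT) ?count_predT ?size_iota //.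
by move=> p; rewrite mem_iota => /h ->.
Qed.

Lemma count_iota_none (P : pred nat) a b :
  (forall p, a <= p < a + b -> ~~ P p) -> count P (iota a b) = 0.
Proof.
move=> h; rewrite (@eq_in_count _ _ pred0) ?count_pred0 //.
by move=> p; rewrite mem_iota => /h /negbTE ->.
Qed.

Lemma count_iota_sub (P : pred nat) j k a b :
  j <= a -> a + b <= j + k -> count P (iota a b) <= count P (iota j k).
Proof.
move=> h1 h2.
have -> : k = (a - j) + (b + (j + k - (a + b))) by lia.
rewrite iotaD iotaD count_cat count_cat.
have -> : j + (a - j) = a by lia.
by rewrite addnCA leq_addr.
Qed.

Lemma count_iotaD (P : pred nat) a b c :
  count P (iota a (b + c)) = count P (iota a b) + count P (iota (a + b) c).
Proof. by rewrite iotaD count_cat. Qed.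

Lemma countS m (S : {set 'I_m}) :
  count (fun x => x \in [seq val s | s in S]) (iota 0 m) = #|S|.
Proof.
rewrite -val_enum_ord count_map.
rewrite (@eq_count _ _ (mem S)); last first.
  by move=> o /=; rewrite (mem_map val_inj) mem_enum.
by rewrite cardE enumT /enum_mem size_filter.
Qed.

Definition gw q k d (o z : 'I_q) (t : nat) (f : seq 'I_q) (Sn : seq nat) (p : nat) : 'I_q :=
  if p < t then nth z f p
  else if p < t + d then o
  else if p < t + k then (if p - (t + d) \in Sn then o else z)
  else if p < t + k + d then z
  else nth z f (p - (k + d)).

Lemma gw_nz q k d (o z : 'I_q) t f Sn p : val o = 1 -> val z = 0 ->
  (val (gw q k d o z t f Sn p) != 0) =
  if p < t then val (nth z f p) != 0
  else if p < t + d then true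
  else if p < t + k then (p - (t + d) \in Sn)
  else if p < t + k + d then false
  else val (nth z f (p - (k + d))) != 0.
Proof.
move=> ho hz; rewrite /gw.
case: ifP => // _; case: ifP => [_|_]; first by rewrite ho.
case: ifP => [_|_]; first by case: ifP => _; rewrite ?ho ?hz.
by case: ifP => _ //; rewrite hz.
Qed.

Lemma window_bad q k d (o z : 'I_q) t f Sn : val o = 1 -> val z = 0 -> d <= k ->
  count (fun p => val (gw q k d o z t f Sn p) != 0) (iota (t + d) k) =
  count (fun x => x \in Sn) (iota 0 (k - d)).
Proof.
move=> ho hz hdk.
have -> : iota (t + d) k = iota (t + d) ((k - d) + d) by rewrite subnK.
rewrite count_iotaD (@count_iota_none _ (t + d + (k - d))) ?addn0; last first.
  move=> p hp; rewrite gw_nz //.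
  have -> : (p < t) = false by lia.
  have -> : (p < t + d) = false by lia.
  have -> : (p < t + k) = false by lia.
  by have -> : (p < t + k + d) = true by lia.
have -> : iota (t + d) (k - d) = map (addn (t + d)) (iota 0 (k - d)).
  by rewrite -iotaDl addn0.
rewrite count_map; apply: eq_in_count => x; rewrite mem_iota add0n => hx /=.
rewrite gw_nz //.
have -> : (t + d + x < t) = false by lia.
have -> : (t + d + x < t + d) = false by lia.
have -> : (t + d + x < t + k) = true by lia.
by rewrite addKn.
Qed.

Lemma mid_count q k d (o z : 'I_q) t f Sn : val o = 1 -> val z = 0 -> d <= k ->
  count (fun p => val (gw q k d o z t f Sn p) != 0) (iota (t + d) (k - d)) =
  count (fun x => x \in Sn) (iota 0 (k - d)).
Proof.
move=> ho hz hdk.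
have -> : iota (t + d) (k - d) = map (addn (t + d)) (iota 0 (k - d)).
  by rewrite -iotaDl addn0.
rewrite count_map; apply: eq_in_count => x; rewrite mem_iota add0n => hx /=.
rewrite gw_nz //.
have -> : (t + d + x < t) = false by lia.
have -> : (t + d + x < t + d) = false by lia.
have -> : (t + d + x < t + k) = true by lia.
by rewrite addKn.
Qed.

Lemma ones_count q k d (o z : 'I_q) t f Sn a b : val o = 1 -> val z = 0 ->
  t <= a -> a + b <= t + d ->
  count (fun p => val (gw q k d o z t f Sn p) != 0) (iota a b) = b.
Proof.
move=> ho hz h1 h2; apply: count_iota_all => p hp; rewrite gw_nz //.
have -> : (p < t) = false by lia.
by have -> : (p < t + d) = true by lia.
Qed.

Lemma window_good q k d (o z : 'I_q) t f Sn j : val o = 1 -> val z = 0 ->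
  1 <= d -> t + d <= k ->
  count (fun x => x \in Sn) (iota 0 (k - d)) = d - 1 ->
  j < t + d ->
  d <= count (fun p => val (gw q k d o z t f Sn p) != 0) (iota j k).
Proof.
move=> ho hz hd htk hS hj.
set P := (fun p => _).
case: (leqP t j) => htj.
- have H1 : count P (iota j ((t + d - j) + (k - d))) <= count P (iota j k).
    by apply: count_iota_sub; lia.
  apply: leq_trans H1.
  rewrite count_iotaD ones_count //; last by lia.
  have -> : j + (t + d - j) = t + d by lia.
  rewrite mid_count //; last by lia.
  by rewrite hS; lia.
- have H1 : count P (iota t d) <= count P (iota j k).
    by apply: count_iota_sub; lia.
  apply: leq_trans H1.
  by rewrite ones_count //; lia.
Qed.

Lemma nth_word q (g : nat -> 'I_q) (z : 'I_q) L p : p < L ->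
  nth z (map g (iota 0 L)) p = g p.
Proof. by move=> hp; rewrite (nth_map 0) ?size_iota // nth_iota. Qed.

Lemma bad_lb q k d : 1 < q -> 0 < d -> d <= k ->
  (k - d).+1 * q ^ (k - d) * 'C(k - d, d - 1) <= #|~: Sset q (k + k) k d|.
Proof.
move=> hq hd hdk.
pose o : 'I_q := Ordinal hq. pose z : 'I_q := Ordinal (ltnW hq).
have ho : val o = 1 by []. have hz : val z = 0 by [].
pose X := ('I_(k - d).+1 * (k - d).-tuple 'I_q * {set 'I_(k - d)})%type.
pose D := [set x : X | #|x.2| == d - 1].
have cardD : #|D| = (k - d).+1 * q ^ (k - d) * 'C(k - d, d - 1).
  have -> : D = setX [set: 'I_(k - d).+1 * (k - d).-tuple 'I_q]
                     [set A : {set 'I_(k - d)} | #|A| == d - 1].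
    by apply/setP => -[a b]; rewrite !inE.
  by rewrite cardsX card_draws cardsT card_prod card_tuple !card_ord.
pose g (x : X) := gw q k d o z ((x.1.1 : nat)) (val x.1.2) [seq val s | s in x.2].
have sizeP : forall x, size (map (g x) (iota 0 (k + k))) == k + k.
  by move=> x; rewrite size_map size_iota.
pose F (x : X) : (k + k).-tuple 'I_q := Tuple (sizeP x).
have tle : forall x, x \in D -> (x.1.1 : nat) + d <= k.
  by move=> x _; have := ltn_ord x.1.1; lia.
have cS : forall x, x \in D ->
    count (fun y => y \in [seq val s | s in x.2]) (iota 0 (k - d)) = d - 1.
  by move=> x; rewrite inE countS => /eqP.
have wbad : forall x, x \in D ->
    wH (take k (drop ((x.1.1 : nat) + d) (F x))) = d - 1.
  move=> x hx /=; rewrite window_map; last by have := tle x hx; rewrite leq_add2r.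
  by rewrite window_bad // cS.
have wgood : forall x j, x \in D -> j < (x.1.1 : nat) + d ->
    d <= wH (take k (drop j (F x))).
  move=> x j hx hj /=; rewrite window_map; last by have := tle x hx; lia.
  by apply: window_good => //; [apply: tle hx | apply: cS].
have Fbad : forall x, x \in D -> F x \in ~: Sset q (k + k) k d.
  move=> x hx; rewrite !inE; apply/wwlP => -[|H]; first by lia.
  have := H ((x.1.1 : nat) + d); rewrite wbad //.
  have := tle x hx; lia.
have key : forall x y, x \in D -> y \in D -> F x = F y -> ~ ((x.1.1 : nat) < (y.1.1 : nat)).
  move=> x y hx hy hF hlt.
  have := wgood y ((x.1.1 : nat) + d) hy; rewrite -hF wbad //; lia.
have Finj : {in D &, injective F}.
  move=> x y hx hy hF.
  have hw : map (g x) (iota 0 (k + k)) = map (g y) (iota 0 (k + k)) := congr1 val hF.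
  have ht : (x.1.1 : nat) = y.1.1.
    case: (ltngtP x.1.1 y.1.1) => // h; first by case: (key x y hx hy hF h).
    by case: (key y x hy hx (esym hF) h).
  have hp : forall p, p < k + k -> g x p = g y p.
    by move=> p hp; rewrite -(@nth_word _ (g x) z (k + k) p hp) -(@nth_word _ (g y) z (k + k) p hp) hw.
  have hi := ltn_ord x.1.1.
  move: x y hx hy hF hw ht hp hi => [[i1 f1] S1] [[i2 f2] S2] hx hy _ _ /= /val_inj ht hp hi.
  subst i2.
  have hmem : forall (S : {set 'I_(k - d)}) (s : 'I_(k - d)), (val s \in [seq val s | s in S]) = (s \in S).
    by move=> S s; rewrite (mem_map val_inj) mem_enum.
  have ff : f1 = f2.
    apply: val_inj; apply: (@eq_from_nth _ z); rewrite ?size_tuple // => y hyk.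
    case: (ltnP y i1) => hyi.
    - have := hp y _; rewrite /g /gw /= hyi; apply; lia.
    - have := hp (y + (k + d)) _; rewrite /g /gw /=.
      have -> : (y + (k + d) < i1) = false by lia.
      have -> : (y + (k + d) < i1 + d) = false by lia.
      have -> : (y + (k + d) < i1 + k) = false by lia.
      have -> : (y + (k + d) < i1 + k + d) = false by lia.
      rewrite addnK; apply; lia.
  have SS : S1 = S2.
    apply/setP => s; have := hp (i1 + d + s) _; rewrite /g /gw /=.
    have hs := ltn_ord s.
    have -> : (i1 + d + s < i1) = false by lia.
    have -> : (i1 + d + s < i1 + d) = false by lia.
    have -> : (i1 + d + s < i1 + k) = true by lia.
    rewrite addKn !hmem.
    case: (s \in S1); case: (s \in S2) => //; try by move=> /(_ _) /(congr1 val) /=; lia.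
  by rewrite ff SS.
rewrite -cardD -(card_in_imset Finj); apply: subset_leq_card.
by apply/subsetP => _ /imsetP [x hx ->]; apply: Fbad.
Qed.

Lemma bad_one q k d : 0 < q -> 0 < d -> 0 < k -> 0 < #|~: Sset q (k + k) k d|.
Proof.
move=> hq hd hk; pose z : 'I_q := Ordinal hq.
apply/card_gt0P; exists [tuple of nseq (k + k) z]; rewrite !inE.
apply/wwlP => -[|H]; first by lia.
have := H 0; rewrite drop0 /= take_nseq ?leq_addr // /wH count_nseq /=; lia.
Qed.

Lemma ffact_lb n m : m <= n -> (n - m).+1 ^ m <= n ^_ m.
Proof.
elim: m n => [|m IH] n hmn; first by rewrite expn0 ffactn0.
rewrite ffactnS expnS.
have h1 : (n - m.+1).+1 = n - m by lia.
rewrite h1; apply: leq_mul; first by lia.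
have hm : m <= n.-1 by lia.
have := IH n.-1 hm; rewrite (_ : (n.-1 - m).+1 = n - m) //; lia.
Qed.

Lemma binom_lb k e : 4 * e.+1 <= k ->
  k ^ e.+1 <= 2 ^ e.+1 * e`! * ((k - e.+1).+1 * 'C(k - e.+1, e)).
Proof.
move=> hk.
have he : e <= k - e.+1 by lia.
have h1 := ffact_lb _ _ he; rewrite -bin_ffact in h1.
set b := (k - e.+1 - e).+1 in h1.
have h2 : b <= (k - e.+1).+1 by lia.
have h3 : k <= 2 * b by lia.
apply: leq_trans (_ : (2 * b) ^ e.+1 <= _).
  by rewrite leq_exp2r.
rewrite expnMn -mulnA leq_mul2l expnS; apply/orP; right.
rewrite expnS; apply: leq_trans (leq_mul h2 h1) _.
by rewrite mulnA mulnC.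
Qed.

Definition Mc q d := (4 * d) ^ d * q ^ (4 * d) * (2 ^ d * (d - 1)`! * q ^ d).

Lemma key_bound q k d : 1 < q -> 0 < d -> d <= k ->
  k ^ d * q ^ k <= Mc q d * #|~: Sset q (k + k) k d|.
Proof.
move=> hq hd hdk.
have hB1 := bad_one _ _ _ (ltnW hq) hd (leq_trans hd hdk).
have hf : 0 < (d - 1)`! by apply: fact_gt0.
have hq0 : 0 < q by lia.
case: (ltnP k (4 * d)) => hk.
- apply: leq_trans (_ : Mc q d <= _); last by rewrite leq_pmulr.
  rewrite /Mc -[k ^ d * q ^ k]muln1; apply: leq_mul; last by rewrite !muln_gt0 expn_gt0 hf expn_gt0 hq0.
  apply: leq_mul; first by rewrite leq_exp2r // ltnW.
  by rewrite leq_pexp2l // ltnW.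
- have hB := bad_lb _ _ _ hq hd hdk.
  case: d hd hdk hk hB hf {hB1} => // e _ hdk hk hB hf.
  have hb := binom_lb _ _ hk.
  rewrite subn1 succnK in hf hB.
  apply: leq_trans (_ : 2 ^ e.+1 * e`! * q ^ e.+1 * ((k - e.+1).+1 * q ^ (k - e.+1) * 'C(k - e.+1, e)) <= _); last first.
    rewrite /Mc subn1 succnK; apply: leq_mul => //.
    by rewrite leq_pmull // muln_gt0 !expn_gt0 hq0; lia.
  have -> : q ^ k = q ^ e.+1 * q ^ (k - e.+1) by rewrite -expnD subnKC //; lia.
  have -> : 2 ^ e.+1 * e`! * q ^ e.+1 * ((k - e.+1).+1 * q ^ (k - e.+1) * 'C(k - e.+1, e))
     = (2 ^ e.+1 * e`! * ((k - e.+1).+1 * 'C(k - e.+1, e))) * (q ^ e.+1 * q ^ (k - e.+1)).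
    by lia.
  by rewrite leq_mul2r hb orbT.
Qed.

Open Scope R_scope.

Lemma INR_muln (a b : nat) : INR (a * b)%N = INR a * INR b.
Proof. by rewrite mulnE mult_INR. Qed.

Lemma INR_addn (a b : nat) : INR (a + b)%N = INR a + INR b.
Proof. by rewrite addnE plus_INR. Qed.

Lemma INR_expn (a b : nat) : INR (a ^ b)%N = INR a ^ b.
Proof. elim: b => [|b IH] //=; by rewrite expnS INR_muln IH. Qed.

Lemma INR_leq (a b : nat) : (a <= b)%N -> INR a <= INR b.
Proof. by move=> h; apply: le_INR; apply/leP. Qed.

Lemma exp_le_mono x y : x <= y -> exp x <= exp y.
Proof. move=> [h|->]; [left; apply: exp_increasing | right] => //. Qed.

Lemma exp_powR x m : exp x ^ m = exp (INR m * x).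
Proof.
elim: m => [|m IH]; first by rewrite /= Rmult_0_l exp_0.
have -> : exp x ^ m.+1 = exp x * exp x ^ m by [].
rewrite IH -exp_plus S_INR; congr exp; ring.
Qed.

Lemma analytic (Q a g b Mr lnQ kR K nR mR rR : R) (n r m k L : nat) :
  1 < Q -> 0 < Mr -> 0 < lnQ -> 0 <= a -> 0 <= g -> 0 <= b -> 0 <= kR -> 0 <= K -> 0 <= mR ->
  n = (r + m * L)%N -> L = (k + k)%N ->
  a <= Q ^ r * g ^ m ->
  g + b = Q ^ L ->
  kR * K * Q ^ k <= Mr * b ->
  nR = rR + mR * (2 * kR) -> rR < 2 * kR -> INR m = mR ->
  a <= Q ^ n * exp (- ((nR - 2 * kR) * K / (2 * Mr * Q ^ k))).
Proof.
move=> hQ hM hl ha hg hb hk hK hm hn hL h1 h2 h3 h4 h5 h6.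
have Qk : 0 < Q ^ k by apply: pow_lt; lra.
have QL : 0 < Q ^ L by apply: pow_lt; lra.
have QLk : Q ^ L = Q ^ k * Q ^ k by rewrite hL addnE pow_add.
have g1 : g <= Q ^ L * exp (- (b / Q ^ L)).
  have := exp_ineq1_le (- (b / Q ^ L)) => e.
  have : Q ^ L * (1 + - (b / Q ^ L)) <= Q ^ L * exp (- (b / Q ^ L)).
    by apply: Rmult_le_compat_l; lra.
  have -> : Q ^ L * (1 + - (b / Q ^ L)) = Q ^ L - b by field; lra.
  lra.
have g2 : g ^ m <= (Q ^ L) ^ m * exp (- (mR * (b / Q ^ L))).
  apply: Rle_trans (pow_incr _ _ _ (conj hg g1)) _.
  by rewrite Rpow_mult_distr exp_powR h6 Ropp_mult_distr_r; right.
have hQn : Q ^ n = Q ^ r * (Q ^ L) ^ m by rewrite hn addnE pow_add mulnC mulnE pow_mult.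
have key : (nR - 2 * kR) * K / (2 * Mr * Q ^ k) <= mR * (b / Q ^ L).
  rewrite QLk.
  have -> : (nR - 2 * kR) * K / (2 * Mr * Q ^ k) = ((nR - 2 * kR) * K * Q ^ k) * / (2 * Mr * Q ^ k * Q ^ k) by field; lra.
  have -> : mR * (b / (Q ^ k * Q ^ k)) = (2 * mR * (Mr * b)) * / (2 * Mr * Q ^ k * Q ^ k) by field; lra.
  apply: Rmult_le_compat_r.
    by left; apply: Rinv_0_lt_compat; repeat apply: Rmult_lt_0_compat; lra.
  have e1 : nR - 2 * kR <= 2 * kR * mR by nra.
  have e2 : 0 <= K * Q ^ k by apply: Rmult_le_pos; lra.
  apply: Rle_trans (_ : 2 * kR * mR * (K * Q ^ k) <= _).
    by rewrite Rmult_assoc; apply: Rmult_le_compat_r.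
  have -> : 2 * kR * mR * (K * Q ^ k) = 2 * mR * (kR * K * Q ^ k) by ring.
  apply: Rmult_le_compat_l => //; lra.
apply: Rle_trans h1 _.
rewrite hQn Rmult_assoc; apply: Rmult_le_compat_l; first by left; apply: pow_lt; lra.
apply: Rle_trans g2 _; apply: Rmult_le_compat_l; first by left; apply: pow_lt.
by apply: exp_le_mono; lra.
Qed.

Theorem lemma7 (q d : nat) (hq : (2 <= q)%coq_nat) (hd : (1 <= d)%coq_nat) :
  exists C : R, 0 < C /\
  exists N : nat, forall n k : nat, (N <= n)%coq_nat -> (d <= k)%coq_nat -> (k <= n)%coq_nat ->
    INR (a_q q n k d) <=
    Rpower (INR q)
      (INR n - C * ((INR n - 2 * INR k) * INR k ^ (d - 1)%coq_nat) / INR q ^ k).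
Proof.
move/leP: hq => hq; move/leP: hd => hd.
pose M := Mc q d.
have hq1 : (1 < q)%N by [].
have hM : (0 < M)%N by rewrite /M /Mc !muln_gt0 !expn_gt0 fact_gt0; lia.
have hQ : 1 < INR q by have := lt_INR 1 q; rewrite /=; apply; apply/ltP.
have hl : 0 < ln (INR q) by rewrite -ln_1; apply: ln_increasing; lra.
have hMr : 0 < INR M by apply: lt_0_INR; apply/ltP.
exists (1 / (2 * INR M * ln (INR q))); split.
  by apply: Rdiv_lt_0_compat; [lra | repeat apply: Rmult_lt_0_compat; lra].
exists 0%N => n k _ /leP hdk /leP hkn.
set L := (k + k)%N. set m := (n %/ L)%N. set r := (n %% L)%N.
have hk0 : (0 < k)%N by lia.
have hL0 : (0 < L)%N by rewrite /L; lia.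
have hn : n = (r + m * L)%N by rewrite /r /m addnC -divn_eq.
have ha : (a_q q n k d <= q ^ r * #|Sset q L k d| ^ m)%N.
  by rewrite a_qE; have := Sset_iter q r m L k d (leq_addr k k); rewrite -hn.
have hG := Sset_compl q L k d.
have hKB := key_bound q k d hq1 hd hdk.
have hr : (r < L)%N by rewrite /r ltn_pmod.
have hQk : 0 < INR q ^ k by apply: pow_lt; lra.
rewrite /Rminus Rpower_plus Rpower_pow; last by lra.
have -> : Rpower (INR q) (- (1 / (2 * INR M * ln (INR q)) * ((INR n + - (2 * INR k)) * INR k ^ (d - 1)) / INR q ^ k))
   = exp (- ((INR n - 2 * INR k) * INR k ^ (d - 1) / (2 * INR M * INR q ^ k))).
  rewrite /Rpower; congr exp; rewrite /Rminus; field; lra.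
have hLR : INR L = 2 * INR k by rewrite /L INR_addn; ring.
apply: (@analytic (INR q) _ (INR #|Sset q L k d|) (INR #|~: Sset q L k d|) (INR M) (ln (INR q))
          (INR k) (INR k ^ (d - 1)) (INR n) (INR m) (INR r) n r m k L) => //.
- exact: pos_INR.
- exact: pos_INR.
- exact: pos_INR.
- exact: pos_INR.
- by apply: pow_le; apply: pos_INR.
- exact: pos_INR.
- by have := INR_leq _ _ ha; rewrite INR_muln !INR_expn.
- by rewrite -INR_addn hG INR_expn.
- have := INR_leq _ _ hKB; rewrite !INR_muln !INR_expn.
  have e : d = (d - 1).+1 by lia.
  by rewrite {1}e.
- by rewrite {1}hn INR_addn INR_muln hLR; ring.
- by rewrite -hLR; apply: lt_INR; apply/ltP.
Qed.
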